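(* The model (P) is feasible and has an optimal solution at an extreme point of its feasible region.
   Context: Model (P) is a multistage stochastic closed-loop EV battery recycling model. Index sets: zones $\mathcal{Z}$; time periods $t\in\mathcal{T}=\{1,\dots,T\}$; planning periods $l\in\mathcal{L}$, with $\mathcal{T}_l$ the periods of planning period $l$ and $l_t$ the planning period of $t$; stages $\sigma\in\mathcal{S}$ with $\sigma_t$ the stage of period $t$; scenario tree nodes $\Omega_\sigma$ at stage $\sigma$ with probabilities $p_\omega$, and $a_\omega(t)$ the ancestor of node $\omega$ at stage $\sigma_t$; battery chemistries $\mathcal{I}$; recycling processes $\mathcal{J}$; materials $\mathcal{K}$ with cathode powders $\mathcal{K}^{\text{CP}}\subset\mathcal{K}$; recycling facility indices $\mathcal{N}^{\text{REC}}_l$ and cathode production line indices $\mathcal{N}^{\text{CP}}_{l,k}$. Operational variables $x\ge 0$ are indexed by $(\omega,z,t,\cdot)$ with $\omega\in\Omega_{\sigma_t}$; capacity variables $y\ge0$ are $y^{\text{REC}}_{z,l,j,n}$ and $y^{\text{CP}}_{z,l,k,n}$. Constraints (all for $t\in\mathcal{T}$, $z\in\mathcal{Z}$, $\omega\in\Omega_{\sigma_t}$ unless stated): (Production) $\sum_{i} \Delta^{\text{NB}}_{i,k} d_{\omega,z,t,i} = x^{\text{NM,NB}}_{\omega,z,t,k} + x^{\text{INV,NB}}_{\omega,z,t,k}$ for $k\in\mathcal{K}^{\text{CP}}$; $\sum_{i} \Delta^{\text{NB}}_{i,k} d_{\omega,z,t,i} = x^{\text{NM,NB}}_{\omega,z,t,k}$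 for $k\in\mathcal{K}\setminus\mathcal{K}^{\text{CP}}$; $\sum_{k'\in\mathcal{K}^{\text{CP}}}\Delta^{\text{CP}}_{k',k}x^{\text{CP,INV}}_{\omega,z,t,k'} = x^{\text{NM,CP}}_{\omega,z,t,k}+x^{\text{MC,CP}}_{\omega,z,t,k}$ and $\sum_{k'\in\mathcal{K}\setminus\mathcal{K}^{\text{CP}}}\Delta^{\text{MC}}_{k',k}x^{\text{MC,CP}}_{\omega,z,t,k'} = x^{\text{INV,MC}}_{\omega,z,t,k}$ for $k\in\mathcal{K}\setminus\mathcal{K}^{\text{CP}}$; $x^{\text{RM,INV}}_{\omega,z,t,k}+x^{\text{RM,S}}_{\omega,z,t,k}=\sum_{i,j}\Delta^{\text{REC}}_{k,i,j}x^{\text{RB,RM}}_{\omega,z,t,i,j}$ for $k\in\mathcal{K}$. (Inventory balance) $x^{\text{RB}}_{\omega,z,0,i}=0$, $x^{\text{INV}}_{\omega,z,0,k}=0$; with $\omega'=a_\omega(t-1)$: $x^{\text{RB}}_{\omega,z,t,i}=x^{\text{RB}}_{\omega',z,t-1,i}+\sum_{z'\ne z}(x^{\text{TR,RB}}_{\omega,z',z,t,i}-x^{\text{TR,RB}}_{\omega,z,z',t,i})+s_{\omega,z,t,i}-\sum_j x^{\text{RB,RM}}_{\omega,z,t,i,j}$; for $k\in\mathcal{K}\setminus\mathcal{K}^{\text{CP}}$: $x^{\text{INV}}_{\omega,z,t,k}=x^{\text{INV}}_{\omega',z,t-1,k}+\sum_{z'\ne z}(x^{\text{TR,RM}}_{\omega,z',z,t,k}-x^{\text{TR,RM}}_{\omega,z,z',t,k})+x^{\text{RM,INV}}_{\omega,z,t,k}-x^{\text{INV,MC}}_{\omega,z,t,k}$;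 for $k\in\mathcal{K}^{\text{CP}}$: the same with $+x^{\text{RM,INV}}_{\omega,z,t,k}+x^{\text{CP,INV}}_{\omega,z,t,k}-x^{\text{INV,NB}}_{\omega,z,t,k}$ as the last terms. (Capacity) for $t\in\mathcal{T}_l$: $\sum_{n\in\mathcal{N}^{\text{REC}}_l}y^{\text{REC}}_{z,l,j,n}\ge\sum_i x^{\text{RB,RM}}_{\omega,z,t,i,j}$ and $\sum_{n\in\mathcal{N}^{\text{CP}}_{l,k}}y^{\text{CP}}_{z,l,k,n}\ge x^{\text{CP,INV}}_{\omega,z,t,k}$ ($k\in\mathcal{K}^{\text{CP}}$); total capacities $\sum_n y^{\text{REC}}_{z,l,j,n}$ and $\sum_n y^{\text{CP}}_{z,l,k,n}$ are nondecreasing in $l$; $y^{\text{REC}}_{z,l,j,n}\le u^{\text{REC}}$, $y^{\text{CP}}_{z,l,k,n}\le u^{\text{CP}}$. Objective: minimize $\sum_{t}(1-\gamma)^{t-1}\big(C^{\text{PL}}_t(y)+\sum_{\omega\in\Omega_{\sigma_t}}p_\omega C^{\text{OP}}_{\omega,t}(x)\big)$, where the linear operational cost is $C^{\text{OP}}_{\omega,t}(x)=\sum_z\big(\sum_{k}c^{\text{NB,NM}}_{\omega,t,k}x^{\text{NM,NB}}_{\omega,z,t,k}+\sum_{k\notin\mathcal{K}^{\text{CP}}}(c^{\text{CP,NM}}_{\omega,t,k}x^{\text{NM,CP}}_{\omega,z,t,k}+c^{\text{MC}}_{\omega,z,t,k}x^{\text{MC,CP}}_{\omega,z,t,k})+\sum_k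 v_{\omega,t,k}(\rho x^{\text{INV}}_{\omega,z,t,k}-\eta x^{\text{RM,S}}_{\omega,z,t,k})+\sum_{k\in\mathcal{K}^{\text{CP}}}c^{\text{CP}}_{\omega,z,t,k}x^{\text{CP,INV}}_{\omega,z,t,k}+\sum_{i,j}c^{\text{REC}}_{\omega,z,t,i,j}x^{\text{RB,RM}}_{\omega,z,t,i,j}+\sum_{z'\ne z}(\sum_k c^{\text{TR,RM}}_{z,z'}x^{\text{TR,RM}}_{\omega,z,z',t,k}+\sum_i c^{\text{TR,RB}}_{z,z'}x^{\text{TR,RB}}_{\omega,z,z',t,i})\big)$ with $\eta\le1$ and $\rho$ proportions, and the planning cost is $C^{\text{PL}}_t(y)=\sum_z\big(\sum_j\sum_{n\in\mathcal{N}^{\text{REC}}_{l_t}}f^{\text{REC}}_{z,j}(y^{\text{REC}}_{z,l_t,j,n})+\sum_{k\in\mathcal{K}^{\text{CP}}}\sum_{n\in\mathcal{N}^{\text{CP}}_{l_t,k}}f^{\text{CP}}_{z,k}(y^{\text{CP}}_{z,l_t,k,n})\big)$, with each $f(y)=\sum_i q_iy^{r_i}+w$ for $y>0$, $f(0)=0$, $r_i\in(0,1]$, $q_i,w\ge0$. Thus (P) is a separable concave minimization over a polyhedron in the nonnegative orthant. Assumption: the parameters $d,s,c,v,p,\Delta$ are nonnegative, $u^{\text{REC}},u^{\text{CP}}$ are positive, $\gamma\in[0,1)$, and the functions $f$ are concave, monotonic increasing, with $f(0)=0$. *)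

(* Defs.v *)
From HB Require Import structures.
From mathcomp Require Import all_boot all_order all_algebra.
From mathcomp Require Import reals.
Import Order.TTheory GRing.Theory Num.Theory.
Local Open Scope ring_scope.

(* Data of the multistage stochastic closed-loop EV battery recycling model *)
(* (P).  Periods are natural numbers t = 1..T; planning periods are 'I_nL,   *)
(* [lt t] is the planning period l_t of period t; [stage t] is sigma_t;      *)
(* [nstage w] is the stage of the scenario-tree node w (so                   *)
(* Omega_sigma = [set w | nstage w == sigma]); [anc w t] is a_w(t), the      *)
(* ancestor of w at stage sigma_t; facility indices are drawn from a finite  *)
(* type NI, N^REC_l = NREC l and N^CP_{l,k} = NCP l k.                       *)
Record model (R : realType) := Model {
  Zn : finType;  (* zones *)
  In : finType;  (* battery chemistries *)
  Jn : finType;  (* recycling processes *)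
  Kn : finType;  (* materials *)
  Om : finType;  (* scenario tree nodes (all stages) *)
  NI : finType;  (* facility / production line indices *)
  KCP : {set Kn};  (* cathode powders *)
  T : nat;
  nL : nat;
  lt : nat -> 'I_nL;
  stage : nat -> nat;
  nstage : Om -> nat;
  anc : Om -> nat -> Om;
  prob : Om -> R;
  NREC : 'I_nL -> {set NI};
  NCP : 'I_nL -> Kn -> {set NI};
  DeltaNB : In -> Kn -> R;
  DeltaCP : Kn -> Kn -> R;
  DeltaMC : Kn -> Kn -> R;
  DeltaREC : Kn -> In -> Jn -> R;
  dem : Om -> Zn -> nat -> In -> R;
  sup : Om -> Zn -> nat -> In -> R;
  cNBNM : Om -> nat -> Kn -> R;
  cCPNM : Om -> nat -> Kn -> R;
  cMC : Om -> Zn -> nat -> Kn -> R;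
  vv : Om -> nat -> Kn -> R;
  rho : R;
  eta : R;
  cCP : Om -> Zn -> nat -> Kn -> R;
  cREC : Om -> Zn -> nat -> In -> Jn -> R;
  cTRRM : Zn -> Zn -> R;
  cTRRB : Zn -> Zn -> R;
  gamma : R;
  uREC : R;
  uCP : R;
  fREC : Zn -> Jn -> R -> R;
  fCP : Zn -> Kn -> R -> R
}.

Arguments Zn {R} m.
Arguments In {R} m.
Arguments Jn {R} m.
Arguments Kn {R} m.
Arguments Om {R} m.
Arguments NI {R} m.
Arguments KCP {R} m.
Arguments T {R} m.
Arguments nL {R} m.
Arguments lt {R} m.
Arguments stage {R} m.
Arguments nstage {R} m.
Arguments anc {R} m.
Arguments prob {R} m.
Arguments NREC {R} m.
Arguments NCP {R} m.
Arguments DeltaNB {R} m.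
Arguments DeltaCP {R} m.
Arguments DeltaMC {R} m.
Arguments DeltaREC {R} m.
Arguments dem {R} m.
Arguments sup {R} m.
Arguments cNBNM {R} m.
Arguments cCPNM {R} m.
Arguments cMC {R} m.
Arguments vv {R} m.
Arguments rho {R} m.
Arguments eta {R} m.
Arguments cCP {R} m.
Arguments cREC {R} m.
Arguments cTRRM {R} m.
Arguments cTRRB {R} m.
Arguments gamma {R} m.
Arguments uREC {R} m.
Arguments uCP {R} m.
Arguments fREC {R} m.
Arguments fCP {R} m.

Set Implicit Arguments. Unset Strict Implicit. Unset Printing Implicit Defensive.

Section Model.
Variables (R : realType) (M : model R).

Definition valid (w : Om M) (t : nat) : bool :=
  (1 <= t <= T M)%N && (nstage M w == stage M t).

Inductive var : Type :=
| vNMNB  (w : Om M) (t : nat) (z : Zn M) (k : Kn M) of valid w t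
| vINVNB (w : Om M) (t : nat) (z : Zn M) (k : Kn M) of valid w t && (k \in KCP M)
| vNMCP  (w : Om M) (t : nat) (z : Zn M) (k : Kn M) of valid w t && (k \notin KCP M)
| vMCCP  (w : Om M) (t : nat) (z : Zn M) (k : Kn M) of valid w t && (k \notin KCP M)
| vCPINV (w : Om M) (t : nat) (z : Zn M) (k : Kn M) of valid w t && (k \in KCP M)
| vINVMC (w : Om M) (t : nat) (z : Zn M) (k : Kn M) of valid w t && (k \notin KCP M)
| vRMINV (w : Om M) (t : nat) (z : Zn M) (k : Kn M) of valid w t
| vRMS   (w : Om M) (t : nat) (z : Zn M) (k : Kn M) of valid w t
| vRBRM  (w : Om M) (t : nat) (z : Zn M) (i : In M) (j : Jn M) of valid w t
| vRB    (w : Om M) (t : nat) (z : Zn M) (i : In M) of valid w t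
| vTRRB  (w : Om M) (t : nat) (z z' : Zn M) (i : In M) of valid w t && (z != z')
| vINV   (w : Om M) (t : nat) (z : Zn M) (k : Kn M) of valid w t
| vTRRM  (w : Om M) (t : nat) (z z' : Zn M) (k : Kn M) of valid w t && (z != z')
| vYREC  (z : Zn M) (l : 'I_(nL M)) (j : Jn M) (n : NI M) of n \in NREC M l
| vYCP   (z : Zn M) (l : 'I_(nL M)) (k : Kn M) (n : NI M) of
           (k \in KCP M) && (n \in NCP M l k).

(* dependent access: value of [F h] if [b] holds, 0 otherwise *)
Definition dget (b : bool) (F : b = true -> R) : R :=
  (if b as b0 return (b = b0 -> R) then fun h => F h else fun _ => 0) erefl.

Variable x : var -> R.

Definition NMNB w t z k := dget (fun h => x (@vNMNB w t z k h)).
Definition INVNB w t z k := dget (fun h => x (@vINVNB w t z k h)).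
Definition NMCP w t z k := dget (fun h => x (@vNMCP w t z k h)).
Definition MCCP w t z k := dget (fun h => x (@vMCCP w t z k h)).
Definition CPINV w t z k := dget (fun h => x (@vCPINV w t z k h)).
Definition INVMC w t z k := dget (fun h => x (@vINVMC w t z k h)).
Definition RMINV w t z k := dget (fun h => x (@vRMINV w t z k h)).
Definition RMS w t z k := dget (fun h => x (@vRMS w t z k h)).
Definition RBRM w t z i j := dget (fun h => x (@vRBRM w t z i j h)).
Definition RB w t z i := dget (fun h => x (@vRB w t z i h)).
Definition TRRB w t z z' i := dget (fun h => x (@vTRRB w t z z' i h)).
Definition INV w t z k := dget (fun h => x (@vINV w t z k h)).
Definition TRRM w t z z' k := dget (fun h => x (@vTRRM w t z z' k h)).
Definition YREC z l j n := dget (fun h => x (@vYREC z l j n h)).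
Definition YCP z l k n := dget (fun h => x (@vYCP z l k n h)).

(* Feasible region of (P).  Values at t = 0 (x^RB_{w,z,0,i}, x^INV_{w,z,0,k})
   are 0: [RB]/[INV] return 0 at t = 0 since (w,0) is not [valid]. *)
Definition feasible : Prop :=
  (forall v, 0 <= x v) /\
  (forall w t z k, valid w t -> k \in KCP M ->
     \sum_(i : In M) DeltaNB M i k * dem M w z t i = NMNB w t z k + INVNB w t z k) /\
  (forall w t z k, valid w t -> k \notin KCP M ->
     \sum_(i : In M) DeltaNB M i k * dem M w z t i = NMNB w t z k) /\
  (forall w t z k, valid w t -> k \notin KCP M ->
     \sum_(k' in KCP M) DeltaCP M k' k * CPINV w t z k' = NMCP w t z k + MCCP w t z k) /\
  (forall w t z k, valid w t -> k \notin KCP M ->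
     \sum_(k' in ~: KCP M) DeltaMC M k' k * MCCP w t z k' = INVMC w t z k) /\
  (forall w t z k, valid w t ->
     RMINV w t z k + RMS w t z k =
     \sum_(i : In M) \sum_(j : Jn M) DeltaREC M k i j * RBRM w t z i j) /\
  (forall w t z i, valid w t ->
     RB w t z i = RB (anc M w t.-1) t.-1 z i
       + \sum_(z' | z' != z) (TRRB w t z' z i - TRRB w t z z' i)
       + sup M w z t i - \sum_(j : Jn M) RBRM w t z i j) /\
  (forall w t z k, valid w t -> k \notin KCP M ->
     INV w t z k = INV (anc M w t.-1) t.-1 z k
       + \sum_(z' | z' != z) (TRRM w t z' z k - TRRM w t z z' k)
       + RMINV w t z k - INVMC w t z k) /\
  (forall w t z k, valid w t -> k \in KCP M ->
     INV w t z k = INV (anc M w t.-1) t.-1 z k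
       + \sum_(z' | z' != z) (TRRM w t z' z k - TRRM w t z z' k)
       + RMINV w t z k + CPINV w t z k - INVNB w t z k) /\
  (forall w t z j, valid w t ->
     \sum_(i : In M) RBRM w t z i j <= \sum_(n in NREC M (lt M t)) YREC z (lt M t) j n) /\
  (forall w t z k, valid w t -> k \in KCP M ->
     CPINV w t z k <= \sum_(n in NCP M (lt M t) k) YCP z (lt M t) k n) /\
  (forall z j (l l' : 'I_(nL M)), (l <= l')%N ->
     \sum_(n in NREC M l) YREC z l j n <= \sum_(n in NREC M l') YREC z l' j n) /\
  (forall z k (l l' : 'I_(nL M)), k \in KCP M -> (l <= l')%N ->
     \sum_(n in NCP M l k) YCP z l k n <= \sum_(n in NCP M l' k) YCP z l' k n) /\
  (forall z l j n (h : n \in NREC M l), x (@vYREC z l j n h) <= uREC M) /\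
  (forall z l k n (h : (k \in KCP M) && (n \in NCP M l k)),
     x (@vYCP z l k n h) <= uCP M).

Definition Cop (w : Om M) (t : nat) : R :=
  \sum_(z : Zn M)
   ( \sum_(k : Kn M) cNBNM M w t k * NMNB w t z k
   + \sum_(k in ~: KCP M) (cCPNM M w t k * NMCP w t z k + cMC M w z t k * MCCP w t z k)
   + \sum_(k : Kn M) vv M w t k * (rho M * INV w t z k - eta M * RMS w t z k)
   + \sum_(k in KCP M) cCP M w z t k * CPINV w t z k
   + \sum_(i : In M) \sum_(j : Jn M) cREC M w z t i j * RBRM w t z i j
   + \sum_(z' | z' != z)
       (\sum_(k : Kn M) cTRRM M z z' * TRRM w t z z' k
        + \sum_(i : In M) cTRRB M z z' * TRRB w t z z' i) ).

Definition Cpl (t : nat) : R :=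
  \sum_(z : Zn M)
   ( \sum_(j : Jn M) \sum_(n in NREC M (lt M t)) fREC M z j (YREC z (lt M t) j n)
   + \sum_(k in KCP M) \sum_(n in NCP M (lt M t) k) fCP M z k (YCP z (lt M t) k n) ).

Definition objective : R :=
  \sum_(1 <= t < (T M).+1)
    (1 - gamma M) ^+ t.-1 *
      (Cpl t + \sum_(w : Om M | nstage M w == stage M t) prob M w * Cop w t).

End Model.

Definition concave_nonneg (R : realType) (f : R -> R) : Prop :=
  forall a b lam : R, 0 <= a -> 0 <= b -> 0 <= lam <= 1 ->
    lam * f a + (1 - lam) * f b <= f (lam * a + (1 - lam) * b).

Definition nondecreasing_nonneg (R : realType) (f : R -> R) : Prop :=
  forall a b : R, 0 <= a -> a <= b -> f a <= f b.

Definition model_assumption (R : realType) (M : model R) : Prop :=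
  (forall i k, 0 <= DeltaNB M i k) /\ (forall k k', 0 <= DeltaCP M k k') /\
  (forall k k', 0 <= DeltaMC M k k') /\ (forall k i j, 0 <= DeltaREC M k i j) /\
  (forall w z t i, 0 <= dem M w z t i) /\ (forall w z t i, 0 <= sup M w z t i) /\
  (forall w t k, 0 <= cNBNM M w t k) /\ (forall w t k, 0 <= cCPNM M w t k) /\
  (forall w z t k, 0 <= cMC M w z t k) /\ (forall w t k, 0 <= vv M w t k) /\
  (forall w z t k, 0 <= cCP M w z t k) /\ (forall w z t i j, 0 <= cREC M w z t i j) /\
  (forall z z', 0 <= cTRRM M z z') /\ (forall z z', 0 <= cTRRB M z z') /\
  (forall w, 0 <= prob M w) /\
  0 <= rho M <= 1 /\ 0 <= eta M <= 1 /\
  0 < uREC M /\ 0 < uCP M /\ 0 <= gamma M < 1 /\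
  (forall z j, concave_nonneg (fREC M z j) /\ nondecreasing_nonneg (fREC M z j)
               /\ fREC M z j 0 = 0) /\
  (forall z k, concave_nonneg (fCP M z k) /\ nondecreasing_nonneg (fCP M z k)
               /\ fCP M z k 0 = 0).

Definition extreme_point (R : realType) (V : Type) (S : (V -> R) -> Prop)
    (x : V -> R) : Prop :=
  S x /\
  forall (a b : V -> R) (lam : R), S a -> S b -> 0 < lam < 1 ->
    (forall v, x v = lam * a v + (1 - lam) * b v) ->
    forall v, a v = x v /\ b v = x v.

(* Main.v *)
Require Import Defs.
From HB Require Import structures.
From mathcomp Require Import all_boot all_order all_algebra.
From mathcomp Require Import reals.
From mathcomp Require Import ring lra.
From Stdlib Require Import Classical FunctionalExtensionality.
Import Order.TTheory GRing.Theory Num.Theory.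
Local Open Scope ring_scope.
Set Implicit Arguments. Unset Strict Implicit. Unset Printing Implicit Defensive.

Definition line {R : realType} {V : Type} (x y : V -> R) (s : R) : V -> R :=
  fun v => x v + s * (y v - x v).

Section Aff.
Variables (R : realType) (X : Type) (V : Type).
Local Notation L := (@line R V).
Definition aff (F : (V -> R) -> R) := forall x y s, F (L x y s) = F x + s * (F y - F x).

Lemma aff_cst c : aff (fun _ => c).
Proof. by move=> x y s; rewrite subrr mulr0 addr0. Qed.
Lemma aff_add F G : aff F -> aff G -> aff (fun x => F x + G x).
Proof. by move=> hF hG x y s; rewrite hF hG; ring. Qed.
Lemma aff_opp F : aff F -> aff (fun x => - F x).
Proof. by move=> hF x y s; rewrite hF; ring. Qed.
Lemma aff_scal c F : aff F -> aff (fun x => c * F x).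
Proof. by move=> hF x y s; rewrite hF; ring. Qed.
Lemma aff_if (b : bool) F G : aff F -> aff G -> aff (fun x => if b then F x else G x).
Proof. by case: b. Qed.
Lemma aff_sum (I : Type) (r : seq I) (P : pred I) (F : I -> (V -> R) -> R) :
  (forall i, aff (F i)) -> aff (fun x => \sum_(i <- r | P i) F i x).
Proof.
move=> hF x y s; elim: r => [|a r IH]; first by rewrite !big_nil; ring.
rewrite !big_cons; case: (P a) => //; rewrite IH hF; ring.
Qed.
Lemma aff_dget (b : bool) (v : b = true -> V) :
  aff (fun x => dget (fun h => x (v h))).
Proof. by move: v; rewrite /dget; case: b => v x y s //; rewrite /line; ring. Qed.
End Aff.

Lemma dget_true (R : realType) (b : bool) (h : b = true) (F : b = true -> R) : dget F = F h.
Proof. by move: F h; rewrite /dget; case: b => F h; rewrite ?(eq_irrelevance h erefl). Qed.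
Lemma dget_false (R : realType) (b : bool) (h : b = false) (F : b = true -> R) : dget F = 0.
Proof. by move: F; rewrite /dget h. Qed.

Ltac unf := rewrite /NMNB /INVNB /NMCP /MCCP /CPINV /INVMC /RMINV /RMS /RBRM /RB /TRRB /INV /TRRM /YREC /YCP.
Ltac aff_tac := unf; repeat first [ apply aff_cst | apply aff_dget | apply aff_if | apply aff_add | apply aff_opp | apply aff_scal | apply aff_sum; intro ].


Section Gsum.
Variables (R : realType) (X : Type).
Definition gsum (A B : Type) (g1 : A -> X -> R) (g2 : B -> X -> R) : A + B -> X -> R :=
  fun c => match c with inl a => g1 a | inr b => g2 b end.
Lemma gsum_all (A B : Type) (g1 : A -> X -> R) (g2 : B -> X -> R) (P : (X -> R) -> Prop) :
  (forall a, P (g1 a)) -> (forall b, P (g2 b)) -> forall c, P (gsum g1 g2 c).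
Proof. by move=> h1 h2 []. Qed.
Lemma gsum_le0 (A B : Type) (g1 : A -> X -> R) (g2 : B -> X -> R) x :
  (forall c, gsum g1 g2 c x <= 0) -> (forall a, g1 a x <= 0) /\ (forall b, g2 b x <= 0).
Proof. by move=> h; split=> [a|b]; [exact: (h (inl a)) | exact: (h (inr b))]. Qed.
End Gsum.

Section Inst.
Variables (R : realType) (M : model R).
Local Notation X := (var M -> R).
Local Notation TT := 'I_(T M).+1.
Local Notation LL := 'I_(nL M).

Definition TK := (Om M * TT * Zn M * Kn M)%type.
Definition gNMNB (c : TK) (x : X) := let '(w, t, z, k) := c in - NMNB x w t z k.
Definition gINVNB (c : TK) (x : X) := let '(w, t, z, k) := c in - INVNB x w t z k.
Definition gNMCP (c : TK) (x : X) := let '(w, t, z, k) := c in - NMCP x w t z k.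
Definition gMCCP (c : TK) (x : X) := let '(w, t, z, k) := c in - MCCP x w t z k.
Definition gCPINV (c : TK) (x : X) := let '(w, t, z, k) := c in - CPINV x w t z k.
Definition gINVMC (c : TK) (x : X) := let '(w, t, z, k) := c in - INVMC x w t z k.
Definition gRMINV (c : TK) (x : X) := let '(w, t, z, k) := c in - RMINV x w t z k.
Definition gRMS (c : TK) (x : X) := let '(w, t, z, k) := c in - RMS x w t z k.
Definition gINV (c : TK) (x : X) := let '(w, t, z, k) := c in - INV x w t z k.
Definition gRBRM (c : Om M * TT * Zn M * In M * Jn M) (x : X) :=
  let '(w, t, z, i, j) := c in - RBRM x w t z i j.
Definition gRB (c : Om M * TT * Zn M * In M) (x : X) :=
  let '(w, t, z, i) := c in - RB x w t z i.
Definition gTRRB (c : Om M * TT * Zn M * Zn M * In M) (x : X) :=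
  let '(w, t, z, z', i) := c in - TRRB x w t z z' i.
Definition gTRRM (c : Om M * TT * Zn M * Zn M * Kn M) (x : X) :=
  let '(w, t, z, z', k) := c in - TRRM x w t z z' k.
Definition gYREC (c : Zn M * LL * Jn M * NI M) (x : X) :=
  let '(z, l, j, n) := c in - YREC x z l j n.
Definition gYCP (c : Zn M * LL * Kn M * NI M) (x : X) :=
  let '(z, l, k, n) := c in - YCP x z l k n.
Definition gcapREC (c : Om M * TT * Zn M * Jn M) (x : X) :=
  let '(w, t, z, j) := c in
  if valid w t then \sum_(i : In M) RBRM x w t z i j
     - \sum_(n in NREC M (lt M t)) YREC x z (lt M t) j n else 0.
Definition gcapCP (c : TK) (x : X) :=
  let '(w, t, z, k) := c in
  if valid w t && (k \in KCP M) then CPINV x w t z k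
     - \sum_(n in NCP M (lt M t) k) YCP x z (lt M t) k n else 0.
Definition gmonREC (c : Zn M * Jn M * LL * LL) (x : X) :=
  let '(z, j, l, l') := c in
  if (l <= l')%N then \sum_(n in NREC M l) YREC x z l j n
     - \sum_(n in NREC M l') YREC x z l' j n else 0.
Definition gmonCP (c : Zn M * Kn M * LL * LL) (x : X) :=
  let '(z, k, l, l') := c in
  if (k \in KCP M) && (l <= l')%N then \sum_(n in NCP M l k) YCP x z l k n
     - \sum_(n in NCP M l' k) YCP x z l' k n else 0.
Definition gbREC (c : Zn M * LL * Jn M * NI M) (x : X) :=
  let '(z, l, j, n) := c in
  if n \in NREC M l then YREC x z l j n - uREC M else 0.
Definition gbCP (c : Zn M * LL * Kn M * NI M) (x : X) :=
  let '(z, l, k, n) := c in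
  if (k \in KCP M) && (n \in NCP M l k) then YCP x z l k n - uCP M else 0.

Definition gall :=
  gsum gNMNB (gsum gINVNB (gsum gNMCP (gsum gMCCP (gsum gCPINV (gsum gINVMC
  (gsum gRMINV (gsum gRMS (gsum gINV (gsum gRBRM (gsum gRB (gsum gTRRB (gsum gTRRM
  (gsum gYREC (gsum gYCP (gsum gcapREC (gsum gcapCP (gsum gmonREC (gsum gmonCP
  (gsum gbREC gbCP))))))))))))))))))).

Definition Cidx := (TK + (TK + (TK + (TK + (TK + (TK + (TK + (TK + (TK +
  ((Om M * TT * Zn M * In M * Jn M) + ((Om M * TT * Zn M * In M) +
  ((Om M * TT * Zn M * Zn M * In M) + ((Om M * TT * Zn M * Zn M * Kn M) +
  ((Zn M * LL * Jn M * NI M) + ((Zn M * LL * Kn M * NI M) +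
  ((Om M * TT * Zn M * Jn M) + (TK + ((Zn M * Jn M * LL * LL) +
  ((Zn M * Kn M * LL * LL) + ((Zn M * LL * Jn M * NI M) + (Zn M * LL * Kn M * NI M)))))))))))))))))))))%type.

Definition gC : Cidx -> X -> R := gall.

Lemma aff_gC c : aff (gC c).
Proof.
rewrite /gC /gall.
repeat (apply: gsum_all); case=> //=; repeat case; intros; aff_tac.
Qed.

Definition Eqs (x : X) : Prop :=
  (forall w t z k, valid w t -> k \in KCP M ->
     \sum_(i : In M) DeltaNB M i k * dem M w z t i = NMNB x w t z k + INVNB x w t z k) /\
  (forall w t z k, valid w t -> k \notin KCP M ->
     \sum_(i : In M) DeltaNB M i k * dem M w z t i = NMNB x w t z k) /\
  (forall w t z k, valid w t -> k \notin KCP M ->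
     \sum_(k' in KCP M) DeltaCP M k' k * CPINV x w t z k' = NMCP x w t z k + MCCP x w t z k) /\
  (forall w t z k, valid w t -> k \notin KCP M ->
     \sum_(k' in ~: KCP M) DeltaMC M k' k * MCCP x w t z k' = INVMC x w t z k) /\
  (forall w t z k, valid w t ->
     RMINV x w t z k + RMS x w t z k =
     \sum_(i : In M) \sum_(j : Jn M) DeltaREC M k i j * RBRM x w t z i j) /\
  (forall w t z i, valid w t ->
     RB x w t z i = RB x (anc M w t.-1) t.-1 z i
       + \sum_(z' | z' != z) (TRRB x w t z' z i - TRRB x w t z z' i)
       + Defs.sup M w z t i - \sum_(j : Jn M) RBRM x w t z i j) /\
  (forall w t z k, valid w t -> k \notin KCP M ->
     INV x w t z k = INV x (anc M w t.-1) t.-1 z k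
       + \sum_(z' | z' != z) (TRRM x w t z' z k - TRRM x w t z z' k)
       + RMINV x w t z k - INVMC x w t z k) /\
  (forall w t z k, valid w t -> k \in KCP M ->
     INV x w t z k = INV x (anc M w t.-1) t.-1 z k
       + \sum_(z' | z' != z) (TRRM x w t z' z k - TRRM x w t z z' k)
       + RMINV x w t z k + CPINV x w t z k - INVNB x w t z k).

Lemma dget_ge0 (b : bool) (v : b = true -> var M) (x : X) :
  (forall v, 0 <= x v) -> 0 <= dget (fun h => x (v h)).
Proof. by move: v; rewrite /dget; case: b. Qed.

Lemma valid_lt (w : Om M) t : valid w t -> (t < (T M).+1)%N.
Proof. by case/andP => /andP [_ h] _; rewrite ltnS. Qed.

Lemma feasE x : feasible x <-> Eqs x /\ forall c, gC c x <= 0.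
Proof.
split.
  move=> [nn [e1 [e2 [e3 [e4 [e5 [e6 [e7 [e8 [c1 [c2 [m1 [m2 [b1 b2]]]]]]]]]]]]]].
  split; first by do 7 (split=> //).
  rewrite /gC /gall.
  repeat (apply: (gsum_all (P := fun G => G x <= 0))); case=> //=; repeat case; intros;
    try (rewrite oppr_le0; unf; exact: dget_ge0).
  - by case: ifP => // hv; rewrite subr_le0; apply: c1.
  - by case: ifP => // /andP [hv hk]; rewrite subr_le0; apply: c2.
  - by case: ifP => // hl; rewrite subr_le0; apply: m1.
  - by case: ifP => // /andP [hk hl]; rewrite subr_le0; apply: m2.
  - case: ifP => // hn; rewrite subr_le0 /YREC (dget_true hn); exact: b1.
  - case: ifP => // hn; rewrite subr_le0 /YCP (dget_true hn); exact: b2.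
move=> [[e1 [e2 [e3 [e4 [e5 [e6 [e7 e8]]]]]]] H].
rewrite /gC /gall in H.
have [h0 H1] := gsum_le0 H.
have [h1 H2] := gsum_le0 H1.
have [h2 H3] := gsum_le0 H2.
have [h3 H4] := gsum_le0 H3.
have [h4 H5] := gsum_le0 H4.
have [h5 H6] := gsum_le0 H5.
have [h6 H7] := gsum_le0 H6.
have [h7 H8] := gsum_le0 H7.
have [h8 H9] := gsum_le0 H8.
have [h9 H10] := gsum_le0 H9.
have [h10 H11] := gsum_le0 H10.
have [h11 H12] := gsum_le0 H11.
have [h12 H13] := gsum_le0 H12.
have [h13 H14] := gsum_le0 H13.
have [h14 H15] := gsum_le0 H14.
have [h15 H16] := gsum_le0 H15.
have [h16 H17] := gsum_le0 H16.
have [h17 H18] := gsum_le0 H17.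
have [h18 H19] := gsum_le0 H18.
have [h19 h20] := gsum_le0 H19.
split.
  case=> [w t z k h|w t z k h|w t z k h|w t z k h|w t z k h|w t z k h|w t z k h|w t z k h
         |w t z i j h|w t z i h|w t z z' i h|w t z k h|w t z z' k h|z l j n h|z l k n h].
  - by have := h0 (w, Ordinal (valid_lt h), z, k); rewrite /= oppr_le0 /NMNB (dget_true h).
  - by have := h1 (w, Ordinal (valid_lt (andP h).1), z, k); rewrite /= oppr_le0 /INVNB (dget_true h).
  - by have := h2 (w, Ordinal (valid_lt (andP h).1), z, k); rewrite /= oppr_le0 /NMCP (dget_true h).
  - by have := h3 (w, Ordinal (valid_lt (andP h).1), z, k); rewrite /= oppr_le0 /MCCP (dget_true h).
  - by have := h4 (w, Ordinal (valid_lt (andP h).1), z, k); rewrite /= oppr_le0 /CPINV (dget_true h).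
  - by have := h5 (w, Ordinal (valid_lt (andP h).1), z, k); rewrite /= oppr_le0 /INVMC (dget_true h).
  - by have := h6 (w, Ordinal (valid_lt h), z, k); rewrite /= oppr_le0 /RMINV (dget_true h).
  - by have := h7 (w, Ordinal (valid_lt h), z, k); rewrite /= oppr_le0 /RMS (dget_true h).
  - by have := h9 (w, Ordinal (valid_lt h), z, i, j); rewrite /= oppr_le0 /RBRM (dget_true h).
  - by have := h10 (w, Ordinal (valid_lt h), z, i); rewrite /= oppr_le0 /RB (dget_true h).
  - by have := h11 (w, Ordinal (valid_lt (andP h).1), z, z', i); rewrite /= oppr_le0 /TRRB (dget_true h).
  - by have := h8 (w, Ordinal (valid_lt h), z, k); rewrite /= oppr_le0 /INV (dget_true h).
  - by have := h12 (w, Ordinal (valid_lt (andP h).1), z, z', k); rewrite /= oppr_le0 /TRRM (dget_true h).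
  - by have := h13 (z, l, j, n); rewrite /= oppr_le0 /YREC (dget_true h).
  - by have := h14 (z, l, k, n); rewrite /= oppr_le0 /YCP (dget_true h).
do 8 (split=> //).
split.
  move=> w t z j hv; have := h15 (w, Ordinal (valid_lt hv), z, j).
  by rewrite /= hv subr_le0.
split.
  move=> w t z k hv hk; have := h16 (w, Ordinal (valid_lt hv), z, k).
  by rewrite /= hv hk subr_le0.
split.
  move=> z j l l' hl; have := h17 (z, j, l, l').
  by rewrite /= hl subr_le0.
split.
  move=> z k l l' hk hl; have := h18 (z, k, l, l').
  by rewrite /= hl hk subr_le0.
split.
  move=> z l j n h; have := h19 (z, l, j, n).
  by rewrite /= h subr_le0 /YREC (dget_true h).
move=> z l k n h; have := h20 (z, l, k, n).
by rewrite /= h subr_le0 /YCP (dget_true h).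
Qed.

Lemma aff_eq (F G : X -> R) x y s : aff F -> aff G -> F x = G x -> F y = G y ->
  F (line x y s) = G (line x y s).
Proof. by move=> hF hG ex ey; rewrite hF hG ex ey. Qed.

Lemma aff_eqf (F G : X -> R) x y s : aff F -> aff G -> F x = G x -> F y = G y ->
  (fun v => F v = G v) (line x y s).
Proof. by move=> hF hG ex ey; rewrite /= hF hG ex ey. Qed.

Ltac eqline x y s := pattern (line x y s);
  match goal with |- (fun v => @?A v = @?B v) _ => apply: (@aff_eq A B); [aff_tac|aff_tac| |] end.

Lemma Eqs_line x y s : Eqs x -> Eqs y -> Eqs (line x y s).
Proof.
move=> [e1 [e2 [e3 [e4 [e5 [e6 [e7 e8]]]]]]] [f1 [f2 [f3 [f4 [f5 [f6 [f7 f8]]]]]]].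
split; first by move=> *; eqline x y s; [apply: e1|apply: f1].
split; first by move=> *; eqline x y s; [apply: e2|apply: f2].
split; first by move=> *; eqline x y s; [apply: e3|apply: f3].
split; first by move=> *; eqline x y s; [apply: e4|apply: f4].
split; first by move=> *; eqline x y s; [apply: e5|apply: f5].
split; first by move=> *; eqline x y s; [apply: e6|apply: f6].
split; first by move=> *; eqline x y s; [apply: e7|apply: f7].
by move=> *; eqline x y s; [apply: e8|apply: f8].
Qed.

Lemma aff_Cop w t : aff (fun x : X => Cop x w t).
Proof. rewrite /Cop. aff_tac. Qed.

Definition cav (F : X -> R) := forall x y l, (forall v, 0 <= x v) -> (forall v, 0 <= y v) ->
  0 <= l <= 1 -> F x + l * (F y - F x) <= F (line x y l).

Lemma cav_aff F : aff F -> cav F.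
Proof. by move=> hF x y l _ _ _; rewrite hF. Qed.
Lemma cav_add F G : cav F -> cav G -> cav (fun x => F x + G x).
Proof.
move=> hF hG x y l hx hy hl; have := hF x y l hx hy hl; have := hG x y l hx hy hl; lra.
Qed.
Lemma cav_scal c F : 0 <= c -> cav F -> cav (fun x => c * F x).
Proof.
move=> c0 hF x y l hx hy hl; have := hF x y l hx hy hl => h.
have : c * (F x + l * (F y - F x)) <= c * F (line x y l) by rewrite ler_wpM2l.
lra.
Qed.
Lemma cav_sum (I : Type) (r : seq I) (P : pred I) (F : I -> X -> R) :
  (forall i, cav (F i)) -> cav (fun x => \sum_(i <- r | P i) F i x).
Proof.
move=> hF x y l hx hy hl; elim: r => [|a r IH]; first by rewrite !big_nil; lra.
rewrite !big_cons; case: (P a) => //; have := hF a x y l hx hy hl; lra.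
Qed.

Lemma cav_f (f : R -> R) (b : bool) (v : b = true -> var M) : concave_nonneg f ->
  cav (fun x => f (dget (fun h => x (v h)))).
Proof.
move=> cf x y l hx hy /andP [l0 l1].
rewrite (aff_dget v x y l).
have ha := dget_ge0 v hx; have hb := dget_ge0 v hy.
set a := dget (fun h => x (v h)) in ha *; set bb := dget (fun h => y (v h)) in hb *.
have := cf bb a l hb ha (introT andP (conj l0 l1)).
have -> : l * bb + (1 - l) * a = a + l * (bb - a) by ring.
by have -> : f a + l * (f bb - f a) = l * f bb + (1 - l) * f a by ring.
Qed.

Hypothesis HA : model_assumption M.

Lemma cav_obj : cav (fun x => objective x).
Proof.
have [hNB [hCP [hMC [hREC [hdem [hsup [hc1 [hc2 [hc3 [hvv [hc4 [hc5 [hc6 [hc7 [hpp [hrho [heta [huR [huC [hgam [hfR hfC]]]]]]]]]]]]]]]]]]]]] := HA.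
rewrite /objective; apply: cav_sum => t; apply: cav_scal.
  by apply: exprn_ge0; case/andP: hgam => *; lra.
apply: cav_add.
  rewrite /Cpl; apply: cav_sum => z; apply: cav_add; apply: cav_sum => j; apply: cav_sum => n.
    by rewrite /YREC; apply: cav_f; case: (hfR z j).
  by rewrite /YCP; apply: cav_f; case: (hfC z j).
apply: cav_sum => w; apply: cav_scal; first by auto.
apply: cav_aff; exact: aff_Cop.
Qed.

Definition bnd t k := \sum_(i : In M) \sum_(j : Jn M) DeltaREC M k i j *
  \sum_(n in NREC M (lt M t)) uREC M.

Lemma bnd_ge0 t k : 0 <= bnd t k.
Proof.
have [hNB [hCP [hMC [hREC [hdem [hsup [hc1 [hc2 [hc3 [hvv [hc4 [hc5 [hc6 [hc7 [hpp [hrho [heta [huR [huC [hgam [hfR hfC]]]]]]]]]]]]]]]]]]]]] := HA.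
apply: sumr_ge0 => i _; apply: sumr_ge0 => j _; apply: mulr_ge0; first by auto.
by apply: sumr_ge0 => n _; apply: ltW.
Qed.

Lemma acc_ge0 x (b : bool) (v : b = true -> var M) : feasible x -> 0 <= dget (fun h => x (v h)).
Proof. by case=> nn _; apply: dget_ge0. Qed.

Lemma RMS_le x w t z k : feasible x -> RMS x w t z k <= bnd t k.
Proof.
move=> Fx.
have [hNB [hCP [hMC [hREC [hdem [hsup [hc1 [hc2 [hc3 [hvv [hc4 [hc5 [hc6 [hc7 [hpp [hrho [heta [huR [huC [hgam [hfR hfC]]]]]]]]]]]]]]]]]]]]] := HA.
have Fx' := Fx.
move: Fx' => [nn [e1 [e2 [e3 [e4 [e5 [e6 [e7 [e8 [c1 [c2 [m1 [m2 [b1 b2]]]]]]]]]]]]]].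
case hv: (valid w t); last by rewrite /RMS (dget_false hv); apply: bnd_ge0.
have h1 : RMS x w t z k <= RMINV x w t z k + RMS x w t z k.
  by rewrite lerDr; rewrite /RMINV; apply: acc_ge0.
apply: (le_trans h1); rewrite (e5 _ _ _ _ hv).
apply: ler_sum => i _; apply: ler_sum => j _; apply: ler_wpM2l; first by auto.
apply: (@le_trans _ _ (\sum_(i0 : In M) RBRM x w t z i0 j)).
  rewrite (bigD1 i) //= lerDl; apply: sumr_ge0 => i' _; rewrite /RBRM; exact: acc_ge0.
apply: (le_trans (c1 _ _ _ j hv)).
apply: ler_sum => n hn; rewrite /YREC (dget_true hn); exact: b1.
Qed.

Lemma Cop_lb x w t : feasible x ->
  - \sum_(z : Zn M) \sum_(k : Kn M) vv M w t k * (Defs.eta M * bnd t k) <= Cop x w t.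
Proof.
move=> Fx.
have [hNB [hCP [hMC [hREC [hdem [hsup [hc1 [hc2 [hc3 [hvv [hc4 [hc5 [hc6 [hc7 [hpp [hrho [heta [huR [huC [hgam [hfR hfC]]]]]]]]]]]]]]]]]]]]] := HA.
rewrite /Cop -sumrN; apply: ler_sum => z _.
have hA1 : 0 <= \sum_(k : Kn M) cNBNM M w t k * NMNB x w t z k.
  by apply: sumr_ge0 => k _; apply: mulr_ge0; [by auto|]; rewrite /NMNB; apply: acc_ge0.
have hA2 : 0 <= \sum_(k in ~: KCP M) (cCPNM M w t k * NMCP x w t z k + cMC M w z t k * MCCP x w t z k).
  apply: sumr_ge0 => k _; apply: addr_ge0; (apply: mulr_ge0; [by auto|]).
    by rewrite /NMCP; apply: acc_ge0.
  by rewrite /MCCP; apply: acc_ge0.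
have hA3 : - \sum_(k : Kn M) vv M w t k * (Defs.eta M * bnd t k) <=
   \sum_(k : Kn M) vv M w t k * (rho M * INV x w t z k - Defs.eta M * RMS x w t z k).
  rewrite -sumrN; apply: ler_sum => k _; rewrite -mulrN; apply: ler_wpM2l; first by auto.
  have : Defs.eta M * RMS x w t z k <= Defs.eta M * bnd t k.
    by apply: ler_wpM2l; [case/andP: heta | apply: RMS_le].
  have : 0 <= rho M * INV x w t z k.
    by apply: mulr_ge0; [case/andP: hrho | rewrite /INV; apply: acc_ge0].
  lra.
have hA4 : 0 <= \sum_(k in KCP M) cCP M w z t k * CPINV x w t z k.
  by apply: sumr_ge0 => k _; apply: mulr_ge0; [by auto|]; rewrite /CPINV; apply: acc_ge0.
have hA5 : 0 <= \sum_(i : In M) \sum_(j : Jn M) cREC M w z t i j * RBRM x w t z i j.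
  apply: sumr_ge0 => i _; apply: sumr_ge0 => j _; apply: mulr_ge0; first by auto.
  by rewrite /RBRM; apply: acc_ge0.
have hA6 : 0 <= \sum_(z' | z' != z)
       (\sum_(k : Kn M) cTRRM M z z' * TRRM x w t z z' k
        + \sum_(i : In M) cTRRB M z z' * TRRB x w t z z' i).
  apply: sumr_ge0 => z' _; apply: addr_ge0; apply: sumr_ge0 => ? _; (apply: mulr_ge0; [by auto|]).
    by rewrite /TRRM; apply: acc_ge0.
  by rewrite /TRRB; apply: acc_ge0.
lra.
Qed.

Lemma obj_lb : exists K, forall x : X, feasible x -> K <= objective x.
Proof.
have [hNB [hCP [hMC [hREC [hdem [hsup [hc1 [hc2 [hc3 [hvv [hc4 [hc5 [hc6 [hc7 [hpp [hrho [heta [huR [huC [hgam [hfR hfC]]]]]]]]]]]]]]]]]]]]] := HA.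
exists (\sum_(1 <= t < (T M).+1) (1 - gamma M) ^+ t.-1 *
   (0 + \sum_(w : Om M | nstage M w == stage M t) prob M w *
      - \sum_(z : Zn M) \sum_(k : Kn M) vv M w t k * (Defs.eta M * bnd t k))).
move=> x Fx; rewrite /objective; apply: ler_sum => t _; apply: ler_wpM2l.
  by apply: exprn_ge0; case/andP: hgam => *; lra.
apply: lerD.
  rewrite /Cpl; apply: sumr_ge0 => z _; apply: addr_ge0.
    apply: sumr_ge0 => j _; apply: sumr_ge0 => n _.
    have [_ [mon f0]] := hfR z j; rewrite -f0; apply: mon => //.
    by rewrite /YREC; apply: acc_ge0.
  apply: sumr_ge0 => k _; apply: sumr_ge0 => n _.
  have [_ [mon f0]] := hfC z k; rewrite -f0; apply: mon => //.
  by rewrite /YCP; apply: acc_ge0.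
apply: ler_sum => w _; apply: ler_wpM2l; [by auto | exact: Cop_lb].
Qed.


Fixpoint rbv (w : Om M) (t : nat) (z : Zn M) (i : In M) : R :=
  match t with
  | 0 => 0
  | t'.+1 => (if valid (anc M w t') t' then rbv (anc M w t') t' z i else 0) + Defs.sup M w z t'.+1 i
  end.

Definition x0 (v : var M) : R :=
  match v with
  | vNMNB w t z k _ => \sum_(i : In M) DeltaNB M i k * dem M w z t i
  | vRB w t z i _ => rbv w t z i
  | _ => 0
  end.

Lemma dget0 (b : bool) : dget (b := b) (fun _ => (0 : R)) = 0.
Proof. by rewrite /dget; case: b. Qed.

Lemma x0_INVNB w t z k : INVNB x0 w t z k = 0. Proof. exact: dget0. Qed.
Lemma x0_NMCP w t z k : NMCP x0 w t z k = 0. Proof. exact: dget0. Qed.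
Lemma x0_MCCP w t z k : MCCP x0 w t z k = 0. Proof. exact: dget0. Qed.
Lemma x0_CPINV w t z k : CPINV x0 w t z k = 0. Proof. exact: dget0. Qed.
Lemma x0_INVMC w t z k : INVMC x0 w t z k = 0. Proof. exact: dget0. Qed.
Lemma x0_RMINV w t z k : RMINV x0 w t z k = 0. Proof. exact: dget0. Qed.
Lemma x0_RMS w t z k : RMS x0 w t z k = 0. Proof. exact: dget0. Qed.
Lemma x0_RBRM w t z i j : RBRM x0 w t z i j = 0. Proof. exact: dget0. Qed.
Lemma x0_TRRB w t z z' i : TRRB x0 w t z z' i = 0. Proof. exact: dget0. Qed.
Lemma x0_INV w t z k : INV x0 w t z k = 0. Proof. exact: dget0. Qed.
Lemma x0_TRRM w t z z' k : TRRM x0 w t z z' k = 0. Proof. exact: dget0. Qed.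
Lemma x0_YREC z l j n : YREC x0 z l j n = 0. Proof. exact: dget0. Qed.
Lemma x0_YCP z l k n : YCP x0 z l k n = 0. Proof. exact: dget0. Qed.

Lemma x0_NMNB w t z k : valid w t -> NMNB x0 w t z k = \sum_(i : In M) DeltaNB M i k * dem M w z t i.
Proof. by move=> h; rewrite /NMNB (dget_true h). Qed.
Lemma x0_RB w t z i : RB x0 w t z i = if valid w t then rbv w t z i else 0.
Proof.
case h: (valid w t); first by rewrite /RB (dget_true h).
by rewrite /RB (dget_false h).
Qed.

Lemma feas_x0 : feasible x0.
Proof.
have [hNB [hCP [hMC [hREC [hdem [hsup [hc1 [hc2 [hc3 [hvv [hc4 [hc5 [hc6 [hc7 [hpp [hrho [heta [huR [huC [hgam [hfR hfC]]]]]]]]]]]]]]]]]]]]] := HA.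
have rb0 : forall t w z i, 0 <= rbv w t z i.
  elim=> [|t IH] w z i //=; apply: addr_ge0; last by auto.
  by case: ifP.
split.
  case=> //= w t z k _; apply: sumr_ge0 => i _; apply: mulr_ge0; auto.
split; first by move=> w t z k hv hk; rewrite x0_NMNB // x0_INVNB addr0.
split; first by move=> w t z k hv hk; rewrite x0_NMNB.
split.
  move=> w t z k hv hk; rewrite x0_NMCP x0_MCCP addr0 big1 // => k' _.
  by rewrite x0_CPINV mulr0.
split.
  move=> w t z k hv hk; rewrite x0_INVMC big1 // => k' _.
  by rewrite x0_MCCP mulr0.
split.
  move=> w t z k hv; rewrite x0_RMINV x0_RMS addr0 big1 // => i _.
  by rewrite big1 // => j _; rewrite x0_RBRM mulr0.
split.
  move=> w t z i hv; rewrite !x0_RB hv.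
  rewrite big1; last by move=> z' _; rewrite !x0_TRRB subrr.
  rewrite [X in _ - X]big1; last by move=> j _; rewrite x0_RBRM.
  case: t hv => [|t] hv; first by case/andP: hv => /andP [].
  by rewrite /= addr0 subr0.
split.
  move=> w t z k hv hk; rewrite !x0_INV x0_RMINV x0_INVMC big1 ?subr0 ?addr0 //.
  by move=> z' _; rewrite !x0_TRRM subrr.
split.
  move=> w t z k hv hk; rewrite !x0_INV x0_RMINV x0_CPINV x0_INVNB big1 ?subr0 ?addr0 //.
  by move=> z' _; rewrite !x0_TRRM subrr.
split.
  move=> w t z j hv; rewrite big1 => [|i _]; last by rewrite x0_RBRM.
  by rewrite big1 // => n _; rewrite x0_YREC.
split.
  move=> w t z k hv hk; rewrite x0_CPINV big1 // => n _; by rewrite x0_YCP.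
split.
  by move=> z j l l' _; rewrite !big1 // => n _; rewrite x0_YREC.
split.
  by move=> z k l l' _ _; rewrite !big1 // => n _; rewrite x0_YCP.
split; first by move=> *; apply: ltW.
by move=> *; apply: ltW.
Qed.

End Inst.

Section Fw.
Variables (R : realType) (V : Type) (C : finType).
Variable g : C -> (V -> R) -> R.
Variable E : (V -> R) -> Prop.
Variable f : (V -> R) -> R.
Variable Sf : (V -> R) -> Prop.
Local Notation line := (@line R V).


Hypothesis gA : forall c x y s, g c (line x y s) = g c x + s * (g c y - g c x).
Hypothesis EA : forall x y s, E x -> E y -> E (line x y s).
Hypothesis SfE : forall x, Sf x <-> (E x /\ forall c, g c x <= 0).
Hypothesis Snn : forall x v, Sf x -> 0 <= x v.
Hypothesis fcav : forall x y l, Sf x -> Sf y -> 0 <= l <= 1 ->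
  f x + l * (f y - f x) <= f (line x y l).
Hypothesis fbnd : exists K, forall x, Sf x -> K <= f x.

Lemma exists_min (P : pred C) (r : C -> R) : (exists c, P c) ->
  exists c, P c /\ forall c', P c' -> r c <= r c'.
Proof.
move=> [c0 Pc0].
suff H : forall s : seq C, (exists c, (c \in s) && P c) ->
  exists c, P c /\ forall c', c' \in s -> P c' -> r c <= r c'.
  have [|c [Pc Hc]] := H (enum C); first by exists c0; rewrite mem_enum Pc0.
  by exists c; split=> // c' Pc'; apply: Hc => //; rewrite mem_enum.
elim=> [|a s IH]; first by case=> c.
move=> Hex.
case: (boolP (has P s)) => [/hasP [c cs Pc]|hP].
  have [c1 [Pc1 Hc1]] := IH (ex_intro _ c (introT andP (conj cs Pc))).
  case: (boolP (P a)) => Pa.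
    case: (lerP (r c1) (r a)) => ra.
      exists c1; split=> // c'; rewrite inE => /orP [/eqP->|]//; exact: Hc1.
    exists a; split=> // c'; rewrite inE => /orP [/eqP->|c's Pc'] //.
    by apply: le_trans (ltW ra) (Hc1 _ c's Pc').
  exists c1; split=> // c'; rewrite inE => /orP [/eqP->|]; first by rewrite (negbTE Pa).
  exact: Hc1.
have Pa : P a.
  case: Hex => c /andP [cs Pc]; move: cs; rewrite inE => /orP [/eqP<-|cs] //.
  by case/hasP: hP; exists c.
exists a; split=> // c'; rewrite inE => /orP [/eqP->|c's Pc'] //.
by case/hasP: hP; exists c'.
Qed.

Lemma line_eq (x y : V -> R) s v : line x y s v = x v + s * (y v - x v).
Proof. by []. Qed.

Definition slack x := [set c | g c x < 0].

Lemma stepA x a : Sf x -> E a -> (forall c, g c x = 0 -> g c a = 0) ->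
  (exists c, 0 < g c a - g c x) ->
  exists s, 0 < s /\ Sf (line x a s) /\ exists c, g c x < 0 /\ g c (line x a s) = 0.
Proof.
move=> /SfE [Ex gx] Ea tight pos.
have [c0 [P0 H0]] := exists_min (fun c => - g c x / (g c a - g c x)) pos.
move: P0; rewrite /= => P0.
have gx0 : g c0 x < 0.
  rewrite lt_neqAle gx andbT; apply/eqP => e.
  by move: P0; rewrite e (tight _ e) subrr ltxx.
exists (- g c0 x / (g c0 a - g c0 x)); split; first by rewrite divr_gt0 // oppr_gt0.
split; last first.
  exists c0; split=> //; rewrite gA -mulrA mulVf ?mulr1 ?addrN //.
  by rewrite gt_eqF.
apply/SfE; split; first exact: EA.
move=> c; rewrite gA.
case: (lerP (g c a - g c x) 0) => sl.
  have hs : 0 <= - g c0 x / (g c0 a - g c0 x) by rewrite divr_ge0 // ?oppr_ge0 ?ltW.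
  have := gx c; nra.
have := H0 c sl; rewrite ler_pdivlMr // => h; lra.
Qed.

Lemma slack_sub x a s : Sf x -> (forall c, g c x = 0 -> g c a = 0) ->
  slack (line x a s) \subset slack x.
Proof.
move=> /SfE [_ gx] tight; apply/subsetP => c; rewrite !inE gA => h.
rewrite lt_neqAle gx andbT; apply/eqP => e.
by move: h; rewrite e (tight _ e) subrr mulr0 addr0 ltxx.
Qed.

Lemma line_refl x a s : line x (line x a (-1)) s = line x a (- s).
Proof. by apply: functional_extensionality => v; rewrite /line; ring. Qed.

Lemma oneside x a : Sf x -> E a -> (forall c, g c x = 0 -> g c a = 0) ->
  (exists c, 0 < g c a - g c x) -> (forall s, 0 <= s -> Sf (line x a (- s))) ->
  exists x1, Sf x1 /\ slack x1 \proper slack x /\ f x1 <= f x.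
Proof.
move=> Sx Ea tight pos ray.
have [s1 [s1p [Sx1 [c0 [c0x c0x1]]]]] := stepA Sx Ea tight pos.
exists (line x a s1); split=> //; split.
  rewrite properEneq slack_sub // andbT; apply/eqP => e.
  have : c0 \in slack x by rewrite inE.
  by rewrite -e inE c0x1 ltxx.
case: (lerP (f (line x a s1)) (f x)) => // hlt; exfalso.
have [K HK] := fbnd.
set x1 := line x a s1 in hlt Sx1.
set d := f x1 - f x.
have dp : 0 < d by rewrite subr_gt0.
have Kx := HK _ Sx.
set s := s1 * (f x - K + 1) / d.
have sp : 0 < s by rewrite divr_gt0 // mulr_gt0 //; lra.
have sd : s * d = s1 * (f x - K + 1) by rewrite /s -mulrA mulVf ?mulr1 // gt_eqF.
have Sy := ray _ (ltW sp).
set y := line x a (- s) in Sy.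
set th := s / (s + s1).
have thp : 0 <= th <= 1.
  apply/andP; split; first by rewrite divr_ge0 // ltW // addr_gt0.
  by rewrite ler_pdivrMr ?addr_gt0 // mul1r lerDl ltW.
have eqx : line y x1 th = x.
  apply: functional_extensionality => v; rewrite /y /x1 /line /th.
  field; rewrite gt_eqF // addr_gt0 //.
have h := fcav Sy Sx1 thp; rewrite eqx in h.
have thE : th * (s + s1) = s by rewrite /th -mulrA mulVf ?mulr1 // gt_eqF // addr_gt0.
have Ky := HK _ Sy.
have h2 : (s + s1) * (f y + th * (f x1 - f y)) <= (s + s1) * f x.
  by rewrite ler_pM2l ?addr_gt0.
have h3 : (s + s1) * (f y + th * (f x1 - f y)) = s1 * f y + s * f x1.
  have -> : (s + s1) * (f y + th * (f x1 - f y)) = (s + s1) * f y + (th * (s + s1)) * (f x1 - f y) by ring.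
  rewrite thE; ring.
rewrite h3 in h2.
have : s * f x1 = s * f x + s1 * (f x - K + 1) by rewrite -sd /d; ring.
nra.
Qed.

Lemma stepB x a : Sf x -> E a -> (forall c, g c x = 0 -> g c a = 0) ->
  (exists c, 0 < g c a - g c x) ->
  exists s, 0 < s /\ Sf (line x a s) /\ slack (line x a s) \proper slack x.
Proof.
move=> Sx Ea tight pos.
have [s1 [s1p [Sx1 [c0 [c0x c0x1]]]]] := stepA Sx Ea tight pos.
exists s1; split=> //; split=> //.
rewrite properEneq slack_sub // andbT; apply/eqP => e.
have : c0 \in slack x by rewrite inE.
by rewrite -e inE c0x1 ltxx.
Qed.

Lemma improve x : Sf x -> ~ extreme_point Sf x ->
  exists x1, Sf x1 /\ slack x1 \proper slack x /\ f x1 <= f x.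
Proof.
move=> Sx nex.
have [a [b [lam [Sa [Sb [hl [hx [v0 hv0]]]]]]]] :
  exists a b lam, Sf a /\ Sf b /\ 0 < lam < 1 /\
    (forall v, x v = lam * a v + (1 - lam) * b v) /\
    exists v, ~ (a v = x v /\ b v = x v).
  apply: NNPP => H; apply: nex; split=> // a b lam Sa Sb hl hx v.
  apply: NNPP => Hv; apply: H; exists a, b, lam; do 4 (split=> //).
  by exists v.
have /andP [l0 l1] := hl.
have xE : x = line b a lam.
  by apply: functional_extensionality => v; rewrite hx /line; ring.
have [Ex gx] := (proj1 (SfE x) Sx).
have [Ea ga] := (proj1 (SfE a) Sa).
have [Eb gb] := (proj1 (SfE b) Sb).
have tight : forall c, g c x = 0 -> g c a = 0.
  move=> c; rewrite xE gA => h.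
  have := ga c; have := gb c; nra.
have av0 : a v0 != x v0.
  apply/eqP => e; apply: hv0; split=> //.
  have := hx v0; rewrite e => h.
  have : (1 - lam) * (b v0 - x v0) = 0 by nra.
  move/eqP; rewrite mulf_eq0 subr_eq0 => /orP [/eqP|/eqP] //; lra.
set a' := line x a (-1).
have Ea' : E a' by apply: EA.
have ga' c : g c a' = g c x - (g c a - g c x) by rewrite /a' gA; ring.
have tight' : forall c, g c x = 0 -> g c a' = 0.
  by move=> c h; rewrite ga'; have := tight _ h; lra.
case: (classic (exists c, 0 < g c a - g c x)) => pos;
  case: (classic (exists c, g c a - g c x < 0)) => neg.
- have [s1 [s1p [Sx1 pr1]]] := stepB Sx Ea tight pos.
  have pos' : exists c, 0 < g c a' - g c x.
    by case: neg => c h; exists c; rewrite ga'; lra.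
  have [s2 [s2p [Sx2 pr2]]] := stepB Sx Ea' tight' pos'.
  rewrite /a' line_refl in Sx2 pr2.
  set x1 := line x a s1 in Sx1 pr1.
  set x2 := line x a (- s2) in Sx2 pr2.
  set th := s2 / (s1 + s2).
  have thp : 0 <= th <= 1.
    apply/andP; split; first by rewrite divr_ge0 // ltW // addr_gt0.
    by rewrite ler_pdivrMr ?addr_gt0 // mul1r lerDr ltW.
  have eqx : line x2 x1 th = x.
    apply: functional_extensionality => v; rewrite /x2 /x1 /line /th.
    field; rewrite gt_eqF // addr_gt0 //.
  have h := fcav Sx2 Sx1 thp; rewrite eqx in h.
  case: (lerP (f x1) (f x2)) => h12.
    exists x1; split=> //; split=> //; nra.
  exists x2; split=> //; split=> //; nra.
- apply: (oneside Sx Ea tight pos).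
  move=> s sp; apply/SfE; split; first exact: EA.
  move=> c; rewrite gA.
  have : ~ (g c a - g c x < 0) by move=> h; apply: neg; exists c.
  move/negP; rewrite -leNgt => h; have := gx c; nra.
- have pos' : exists c, 0 < g c a' - g c x.
    by case: neg => c h; exists c; rewrite ga'; lra.
  apply: (oneside Sx Ea' tight' pos').
  move=> s sp; rewrite /a' line_refl opprK; apply/SfE; split; first exact: EA.
  move=> c; rewrite gA.
  have : ~ (0 < g c a - g c x) by move=> h; apply: pos; exists c.
  move/negP; rewrite -leNgt => h; have := gx c; nra.
- exfalso.
  have sl0 c : g c a - g c x = 0.
    apply/eqP; rewrite eq_le; apply/andP; split.
      by rewrite leNgt; apply/negP => h; apply: pos; exists c.
    by rewrite leNgt; apply/negP => h; apply: neg; exists c.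
  set s := - (x v0 + 1) / (a v0 - x v0).
  have Sl : Sf (line x a s).
    apply/SfE; split; first exact: EA.
    by move=> c; rewrite gA sl0 mulr0 addr0.
  have := Snn v0 Sl; rewrite /line /s -mulrA mulVf ?subr_eq0 //; lra.
Qed.

Lemma descent n x : (#|slack x| <= n)%N -> Sf x ->
  exists e, extreme_point Sf e /\ f e <= f x.
Proof.
elim: n x => [|n IH] x hn Sx; case: (classic (extreme_point Sf x)) => ex;
  try by exists x.
- have [x1 [_ [pr _]]] := improve Sx ex.
  by move: (proper_card pr); rewrite ltnNge (leq_trans hn (leq0n _)).
- have [x1 [Sx1 [pr fx1]]] := improve Sx ex.
  have [e [ee fe]] := IH x1 (leq_trans (proper_card pr) hn) Sx1.
  by exists e; split=> //; apply: le_trans fe fx1.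
Qed.


Definition tset x := [set c | g c x == 0].

Lemma uniq_ext e1 e2 : extreme_point Sf e1 -> extreme_point Sf e2 ->
  tset e1 = tset e2 -> forall v, e2 v = e1 v.
Proof.
move=> [S1 ex1] [S2 _] T12.
have [E1 g1] := proj1 (SfE e1) S1.
have [E2 g2] := proj1 (SfE e2) S2.
set a := line e2 e1 2.
have Ea : E a by apply: EA.
have tight c : g c e1 = 0 -> g c a = 0.
  move=> h; have : c \in tset e1 by rewrite inE h.
  rewrite T12 inE => /eqP h2; rewrite /a gA h h2; ring.
have [s [sp Sy]] : exists s, 0 < s /\ Sf (line e1 a s).
  case: (classic (exists c, 0 < g c a - g c e1)) => pos.
    by have [s [sp [Sy _]]] := stepA S1 Ea tight pos; exists s.
  exists 1; split=> //; apply/SfE; split; first exact: EA.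
  move=> c; rewrite gA mul1r.
  have : ~ (0 < g c a - g c e1) by move=> h; apply: pos; exists c.
  move/negP; rewrite -leNgt => h; have := g1 c; lra.
set th := 1 / (1 + s).
have thp : 0 < th < 1.
  apply/andP; split; first by rewrite divr_gt0 // addr_gt0.
  by rewrite ltr_pdivrMr ?addr_gt0 // mul1r ltrDl.
have hx : forall w, e1 w = th * line e1 a s w + (1 - th) * e2 w.
  move=> w; rewrite /a /line /th; field; rewrite gt_eqF // addr_gt0 //.
by move=> v; have [_ ->] := ex1 _ _ th Sy S2 thp hx v.
Qed.

Lemma min_ext : (exists e, extreme_point Sf e) ->
  exists e, extreme_point Sf e /\ forall e', extreme_point Sf e' -> f e <= f e'.
Proof.
move=> Hex.
suff H : forall s : seq {set C}, (exists e, extreme_point Sf e /\ tset e \in s) ->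
  exists e, extreme_point Sf e /\ forall e', extreme_point Sf e' -> tset e' \in s -> f e <= f e'.
  have [|e [ee He]] := H (enum {set C}).
    by case: Hex => e ee; exists e; rewrite mem_enum.
  by exists e; split=> // e' ee'; apply: He => //; rewrite mem_enum.
have feq e1 e2 : extreme_point Sf e1 -> extreme_point Sf e2 -> tset e1 = tset e2 -> f e2 = f e1.
  move=> h1 h2 T; congr f; apply: functional_extensionality; exact: uniq_ext.
elim=> [|A s IH]; first by case=> e [].
move=> Hs.
case: (classic (exists e, extreme_point Sf e /\ tset e \in s)) => hs.
  have [e1 [ee1 He1]] := IH hs.
  case: (classic (exists e, extreme_point Sf e /\ tset e = A)) => [[e2 [ee2 T2]]|hA].
    case: (lerP (f e1) (f e2)) => h12.
      exists e1; split=> // e' ee'; rewrite inE => /orP [/eqP T'|]; last exact: He1.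
      by rewrite (feq e2 e') // T' T2.
    exists e2; split=> // e' ee'; rewrite inE => /orP [/eqP T'|e's].
      by rewrite (feq e2 e') // T' T2.
    by apply: le_trans (ltW h12) (He1 _ ee' e's).
  exists e1; split=> // e' ee'; rewrite inE => /orP [/eqP T'|]; last exact: He1.
  by exfalso; apply: hA; exists e'.
case: Hs => e [ee]; rewrite inE => /orP [/eqP Te|es]; last by exfalso; apply: hs; exists e.
exists e; split=> // e' ee'; rewrite inE => /orP [/eqP T'|e's].
  by rewrite (feq e e') // T' Te.
by exfalso; apply: hs; exists e'.
Qed.

Theorem fw_main x0 : Sf x0 ->
  exists e, extreme_point Sf e /\ forall x, Sf x -> f e <= f x.
Proof.
move=> S0.
have [e0 [ee0 _]] := descent (leqnn _) S0.
have [e [ee He]] := min_ext (ex_intro _ e0 ee0).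
exists e; split=> // x Sx.
have [e1 [ee1 fe1]] := descent (leqnn _) Sx.
exact: le_trans (He _ ee1) fe1.
Qed.

End Fw.

Theorem proposition2 (R : realType) (M : model R) :
  model_assumption M ->
  (exists x : var M -> R, feasible x) /\
  (exists x : var M -> R,
     extreme_point (@feasible R M) x /\
     forall x' : var M -> R, feasible x' -> objective x <= objective x').
Proof.
move=> HA.
split; first by exists (@x0 R M); exact: feas_x0.
apply: (@fw_main R (var M) (Cidx M) (@gC R M) (@Eqs R M) (fun x => objective x) (@feasible R M)).
- move=> c x y s; exact: aff_gC.
- move=> x y s; exact: Eqs_line.
- move=> x; exact: feasE.
- by move=> x v [].
- move=> x y l Fx Fy hl; apply: (cav_obj HA) => //; [by case: Fx | by case: Fy].
- exact: obj_lb.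
- exact: (feas_x0 HA).
Qed.
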